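(* Let $X_1,\dots,X_n,Y_{11},\dots,Y_{1n}$ be i.i.d. non-negative absolutely continuous random variables. Let $\tau_{n|n}(\mathbf X)=\min\{X_1,\dots,X_n\}$, $\tau_{n|n}(\mathbf Y_1)=\min\{Y_{11},\dots,Y_{1n}\}$ and $\tau_{n|n}(\mathbf X\vee\mathbf Y_1)=\min_{1\le j\le n}\max\{X_j,Y_{1j}\}$. Then $$\max\{\tau_{n|n}(\mathbf X),\tau_{n|n}(\mathbf Y_1)\}\underset{c}{\succ}\tau_{n|n}(\mathbf X\vee\mathbf Y_1).$$
   Context: All random variables are non-negative and absolutely continuous with support $[0,\infty)$. For a random variable $W$: density $f_W$, survival $\bar F_W$, hazard rate $r_W=f_W/\bar F_W$. $U\underset{c}{\prec}V$ means $r_U(x)/r_V(x)$ is increasing (non-decreasing) in $x\ge0$; $U\underset{c}{\succ}V$ means $V\underset{c}{\prec}U$. *)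

(* Defs.v *)
From mathcomp Require Import all_boot all_order all_algebra.
From mathcomp Require Import all_classical all_reals all_analysis.
Set Implicit Arguments. Unset Strict Implicit. Unset Printing Implicit Defensive.
Import Order.TTheory GRing.Theory Num.Theory.
Local Open Scope classical_set_scope.
Local Open Scope ring_scope.

Section Defs.
Context (d : measure_display) (T : measurableType d) (R : realType)
        (P : probability T R).

(* mutual independence of a finite family of real random variables:
   product rule for every choice of Borel sets (taking B i = setT
   gives every subfamily). *)
Definition mutually_independent (I : finType) (Z : I -> T -> R) : Prop :=
  forall B : I -> set R, (forall i, measurable (B i)) ->
    P (\big[setI/setT]_(i : I) (Z i @^-1` B i))
    = (\prod_(i : I) P (Z i @^-1` B i))%E.

Definition identically_distributed (I : finType) (Z : I -> T -> R) : Prop :=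
  forall i j (B : set R), measurable B -> P (Z i @^-1` B) = P (Z j @^-1` B).

Definition abs_continuous (W : T -> R) : Prop :=
  forall B : set R, measurable B -> (@lebesgue_measure R) B = 0%E ->
    P (W @^-1` B) = 0%E.

Definition support_nonneg_halfline (W : T -> R) : Prop :=
  P (W @^-1` `[0, +oo[) = 1%E /\
  forall x e : R, 0 <= x -> 0 < e -> (0 < P (W @^-1` [set w : R | x - e < w < x + e]%R))%E.

Definition cdf (W : T -> R) (x : R) : R := fine (P (W @^-1` `]-oo, x])).
Definition survival (W : T -> R) (x : R) : R := 1 - cdf W x.
(* density = derivative of the cdf (meaningful where derivable) *)
Definition density (W : T -> R) (x : R) : R := derive1 (cdf W) x.
Definition hazard (W : T -> R) (x : R) : R := density W x / survival W x.

(* U <_c V : r_U / r_V is non-decreasing on [0, +oo), at the points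
   where both hazard rates are defined (cdf derivable) and r_V > 0. *)
Definition hr_ratio_le (U V : T -> R) : Prop :=
  forall x y : R, 0 <= x -> x <= y ->
    derivable (cdf U) x 1 -> derivable (cdf U) y 1 ->
    derivable (cdf V) x 1 -> derivable (cdf V) y 1 ->
    0 < hazard V x -> 0 < hazard V y ->
    hazard U x / hazard V x <= hazard U y / hazard V y.

Definition hr_ratio_ge (U V : T -> R) : Prop := hr_ratio_le V U.

End Defs.

Definition min_ord (R : realType) (n : nat) (z : 'I_n.+1 -> R) : R :=
  \big[Num.min/z ord0]_(j < n.+1) z j.

(* Main.v *)
Require Import Defs.
From mathcomp Require Import all_boot all_order all_algebra.
From mathcomp Require Import all_classical all_reals all_analysis.
From mathcomp Require Import ring lra.
Import Order.TTheory GRing.Theory Num.Theory.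
Local Open Scope classical_set_scope.
Local Open Scope ring_scope.

Lemma bigsetIP (T : Type) (I : eqType) (r : seq I) (Q : pred I) (f : I -> set T) t :
  (\big[setI/setT]_(i <- r | Q i) f i) t <-> (forall i, i \in r -> Q i -> f i t).
Proof.
elim: r => [|a r IH]; first by rewrite big_nil; split => // _ i; rewrite in_nil.
rewrite big_cons; split.
- case: ifP => Qa.
  + move=> [fa /IH H] i; rewrite in_cons => /orP [/eqP -> //|]; exact: H.
  + move=> /IH H i; rewrite in_cons => /orP [/eqP -> |]; [by rewrite Qa|exact: H].
- move=> H; case: ifP => Qa.
  + split; first by apply: H => //; rewrite in_cons eqxx.
    by apply/IH => i ir; apply: H; rewrite in_cons ir orbT.
  + by apply/IH => i ir; apply: H; rewrite in_cons ir orbT.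
Qed.

Section A.
Context (R : realType).

Lemma derive_gmax (f : R -> R) c : derivable f c 1 -> (forall t, f t <= f c) -> 'D_1 f c = 0.
Proof.
move=> dfc cmax; apply/eqP; rewrite eq_le; apply/andP; split.
  rewrite ['D_1 f c]cvg_at_rightE; last exact: dfc.
  apply: limr_le.
    rewrite -(cvg_at_rightE (fun h : R => h^-1 *: ((f \o shift c) _ - f c))) //.
    apply: cvg_trans dfc; apply: cvg_app.
    move=> A [e egt0 Ae]; exists e => // x xe xgt0; apply: Ae => //.
    exact/lt0r_neq0.
  near=> h; apply: mulr_ge0_le0.
    by rewrite invr_ge0; apply: ltW; near: h; exists 1 => /=.
  by rewrite subr_le0; apply: cmax.
rewrite ['D_1 f c]cvg_at_leftE; last exact: dfc.
apply: limr_ge.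
  rewrite -(cvg_at_leftE (fun h => h^-1 *: ((f \o shift c) _ - f c))) //.
  apply: cvg_trans dfc; apply: cvg_app.
  move=> A [e egt0 Ae]; exists e => // x xe xgt0; apply: Ae => //.
  exact/ltr0_neq0.
near=> h; apply: mulr_le0.
  by rewrite invr_le0; apply: ltW; near: h; exists 1 => /=.
by rewrite subr_le0; apply: cmax.
Unshelve. all: by end_near. Qed.

Lemma derive_gmin (f : R -> R) c : derivable f c 1 -> (forall t, f c <= f t) -> 'D_1 f c = 0.
Proof.
move=> dfc cmin.
have : 'D_1 (- f) c = 0.
  apply: derive_gmax; first exact: derivableN.
  by move=> t; rewrite !fctE lerN2.
by rewrite deriveN // => /eqP; rewrite oppr_eq0 => /eqP.
Qed.

Definition Gf (n : nat) (s : R) :=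
  (2 - s ^+ n.+1) / (1 - s ^+ n.+1 + \sum_(i < n.+1) s ^+ i).

Lemma sumX_ge1 (n : nat) (s : R) : 0 <= s -> 1 <= \sum_(i < n.+1) s ^+ i.
Proof.
move=> s0; rewrite big_ord_recl expr0 lerDl; apply: sumr_ge0 => i _.
exact: exprn_ge0.
Qed.

Lemma Gf_mono (n : nat) (s1 s2 : R) : 0 <= s2 -> s2 <= s1 -> s1 <= 1 -> Gf n s1 <= Gf n s2.
Proof.
move=> s20 s21 s11.
have s10 : 0 <= s1 by apply: le_trans s21.
have A1 := @sumX_ge1 n _ s10; have A2 := @sumX_ge1 n _ s20.
have A12 : \sum_(i < n.+1) s2 ^+ i <= \sum_(i < n.+1) s1 ^+ i.
  by apply: ler_sum => i _; apply: lerXn2r; rewrite ?nnegrE.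
have u12 : s2 ^+ n.+1 <= s1 ^+ n.+1 by apply: lerXn2r; rewrite ?nnegrE.
have u1 : s1 ^+ n.+1 <= 1 by apply: exprn_ile1.
have u2 : 0 <= s2 ^+ n.+1 by apply: exprn_ge0.
rewrite /Gf ler_pdivrMr; last by lra.
rewrite mulrAC ler_pdivlMr; last by lra.
set u1' := s1 ^+ n.+1 in u12 u1 *; set u2' := s2 ^+ n.+1 in u12 u2 *.
set a1 := \sum_(i < n.+1) s1 ^+ i in A1 A12 *; set a2 := \sum_(i < n.+1) s2 ^+ i in A2 A12 *.
nra.
Qed.


Lemma ratio_eq (F : R -> R) (n : nat) x :
  (forall y, 0 <= F y <= 1) ->
  let cU := fun y => (1 - (1 - F y)^+n.+1)^+2 in
  let cV := fun y => 1 - (1 - F y^+2)^+n.+1 in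
  derivable cU x 1 -> 0 < derive1 cU x / (1 - cU x) ->
  (derive1 cV x / (1 - cV x)) / (derive1 cU x / (1 - cU x)) = Gf n (1 - F x).
Proof.
move=> F01 cU cV dU hU.
have w01 : forall y, 0 <= 1 - F y <= 1.
  by move=> y; have /andP[f0 f1] := F01 y; apply/andP; split; lra.
have p01 : forall y, 0 <= (1 - F y)^+n.+1 <= 1.
  move=> y; have /andP[w0 w1] := w01 y.
  by rewrite exprn_ge0 // exprn_ile1.
have cU01 : forall y, 0 <= cU y <= 1.
  move=> y; have /andP[p0 p1] := p01 y; rewrite /cU sqr_ge0 /= exprn_ile1 //; lra.
have u1 : cU x != 1.
  by apply/negP => /eqP h; move: hU; rewrite h subrr invr0 mulr0 ltxx.
have u0 : cU x != 0.
  apply/negP => /eqP h; move: hU; rewrite derive1E (@derive_gmin _ _ dU) ?mul0r ?ltxx //.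
  by move=> t; rewrite h; have /andP[] := cU01 t.
pose psi (u : R) : R := 1 - (1 - Num.sqrt u) `^ (n.+1%:R^-1).
have eF : F = psi \o cU.
  apply/funext => y /=; rewrite /psi /cU.
  have /andP [w0 w1] := w01 y; have /andP [p0 p1] := p01 y.
  rewrite sqrtr_sqr ger0_norm ?subr_ge0 //.
  have -> : 1 - (1 - (1 - F y) ^+ n.+1) = (1 - F y) ^+ n.+1 by ring.
  rewrite -powR_mulrn // -powRrM mulfV ?powRr1 ?pnatr_eq0 //; ring.
have ulo : 0 < cU x by have /andP[] := cU01 x; rewrite lt0r u0.
have uhi : cU x < 1 by have /andP[_] := cU01 x; rewrite le_eqVlt (negbTE u1).
have sq1 : 0 < 1 - Num.sqrt (cU x).
  by rewrite subr_gt0 -[X in _ < X]sqrtr1 ltr_sqrt.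
have dF : derivable F x 1.
  have h1 : is_derive (cU x) 1 (fun u => 1 - Num.sqrt u) (0 - (2 * Num.sqrt (cU x))^-1) :=
    is_deriveB (is_derive_cst (1:R) (cU x) 1) (is_derive1_sqrt ulo).
  have h2 := @is_derive1_comp R (fun w => w `^ (n.+1%:R^-1)) (fun u => 1 - Num.sqrt u) (cU x) _ _ (is_derive1_powR (n.+1%:R^-1) sq1) h1.
  have h3 := is_deriveB (is_derive_cst (1:R) (cU x) 1) h2.
  have h4 := @is_derive1_comp R (cst 1 - (fun w => w `^ (n.+1%:R^-1)) \o (fun u => 1 - Num.sqrt u)) cU x _ _ h3 (derivableP dU).
  set g := (X in is_derive _ _ X _) in h4.
  have -> : F = g by rewrite eF; apply/funext => y; rewrite /g /psi /=.
  by case: h4.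
have Fd := derivableP dF.
set a := 'D_1 F x in Fd.
have g1 := is_deriveB (is_derive_cst (1:R) x 1) Fd.
have g2 := is_deriveX n.+1 g1.
have g3 := is_deriveB (is_derive_cst (1:R) x 1) g2.
have g4 := is_deriveX 2 g3.
have k2 := is_deriveX 2 Fd.
have k3 := is_deriveB (is_derive_cst (1:R) x 1) k2.
have k4 := is_deriveX n.+1 k3.
have k5 := is_deriveB (is_derive_cst (1:R) x 1) k4.
have eU : cU = (cst 1 - (cst 1 - F) ^+ n.+1) ^+ 2.
  by apply/funext => y; rewrite /cU !fctE.
have eV : cV = cst 1 - (cst 1 - F ^+ 2) ^+ n.+1.
  by apply/funext => y; rewrite /cV !fctE.
have dUv : 'D_1 cU x = (2 * (1 - (1 - F x) ^+ n.+1)) * (n.+1%:R * (1 - F x) ^+ n * a).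
  rewrite [in LHS]eU (@derive_val _ _ _ _ _ _ _ g4) !fctE /= -![_ *: _]/(_ * _) expr1; ring.
have dVv : 'D_1 cV x = n.+1%:R * (1 - F x ^+ 2) ^+ n * (2 * F x * a).
  rewrite [in LHS]eV (@derive_val _ _ _ _ _ _ _ k5) !fctE /= -![_ *: _]/(_ * _) expr1; ring.
rewrite derive1E in hU.
rewrite !derive1E dUv dVv /cU /cV.
rewrite dUv /cU in hU.
rewrite /cU in u0 u1.
have /andP [t0 t1] := F01 x.
have [s hs] : exists s, F x = 1 - s by exists (1 - F x); ring.
rewrite !hs in hU u0 u1 t0 t1 *.
have e1 : 1 - (1 - s) = s by ring.
rewrite !e1 in hU u0 u1 *.
rewrite ![s ^+ n.+1]exprS in hU u0 u1 *.
rewrite ![(1 - (1 - s) ^+ 2) ^+ n.+1]exprS.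
set p := s ^+ n in hU u0 u1 *.
set q := (1 - (1 - s) ^+ 2) ^+ n.
have hsp : s * p != 0.
  by apply/negP => /eqP h; move: u1; rewrite h subr0 expr1n eqxx.
have h1sp : 1 - s * p != 0.
  by apply/negP => /eqP h; move: u0; rewrite h expr0n eqxx.
have s0 : s != 0 by move: hsp; rewrite mulf_eq0 negb_or => /andP[].
have p0 : p != 0 by move: hsp; rewrite mulf_eq0 negb_or => /andP[].
have s1 : 1 - s != 0.
  apply/negP => /eqP h; have hs1 : s = 1 by lra.
  by move: h1sp; rewrite /p hs1 expr1n mul1r subrr eqxx.
have a0 : a != 0.
  by apply/negP => /eqP h; move: hU; rewrite h !(mulr0, mul0r) ltxx.
have sgt0 : 0 < s by rewrite lt0r s0 /=; lra.
have r0 : 0 < 1 - (1 - s) ^+ 2 by rewrite expr2; nra.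
have q0 : q != 0 by rewrite expf_neq0 // gt_eqF.
have eA : \sum_(i < n.+1) s ^+ i = (1 - s * p) / (1 - s).
  rewrite (_ : 1 - s * p = (1 - s) * \sum_(i < n.+1) s ^+ i); last first.
    by rewrite /p -exprS -opprB subrX1 -mulNr opprB.
  by rewrite [(1 - s) * _]mulrC mulfK.
rewrite /Gf eA.
rewrite ![s ^+ n.+1]exprS -/p. field.
rewrite s1 h1sp a0 p0 /=.
have -> : (1 - s * p) * (1 - s) + (1 - s * p) = (1 - s * p) * (2 - s) by ring.
have -> : 1 - (1 - (1 - (1 - s) ^+ 2) * q) = (1 - (1 - s) ^+ 2) * q by ring.
have u1' : 1 - (1 - s * p) ^+ 2 != 0 by rewrite subr_eq0 eq_sym.
have n0 : 1 + n%:R != 0 :> R by rewrite gt_eqF //; have := ler0n R n; lra.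
rewrite u1' n0 /=; apply/andP; split; apply: mulf_neq0 => //; rewrite gt_eqF //; lra.
Qed.


Lemma analytic (F : R -> R) (n : nat) :
  (forall y, 0 <= F y <= 1) -> {homo F : x y / x <= y} ->
  let cU := fun y => (1 - (1 - F y)^+n.+1)^+2 in
  let cV := fun y => 1 - (1 - F y^+2)^+n.+1 in
  forall x y, x <= y -> derivable cU x 1 -> derivable cU y 1 ->
  0 < derive1 cU x / (1 - cU x) -> 0 < derive1 cU y / (1 - cU y) ->
  (derive1 cV x / (1 - cV x)) / (derive1 cU x / (1 - cU x)) <=
  (derive1 cV y / (1 - cV y)) / (derive1 cU y / (1 - cU y)).
Proof.
move=> F01 Fm cU cV x y xy dx dy hx hy.
rewrite (@ratio_eq F n x F01 dx hx) (@ratio_eq F n y F01 dy hy).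
have := F01 x; have := F01 y; have := Fm _ _ xy => h /andP[h1 h2] /andP[h3 h4].
apply: Gf_mono; lra.
Qed.

Lemma min_ord_le (n : nat) (z : 'I_n.+1 -> R) j : min_ord z <= z j.
Proof.
rewrite /min_ord; elim: (index_enum _) (mem_index_enum j) => // a r IH.
rewrite in_cons big_cons => /orP [/eqP -> | jr]; first by rewrite ge_min lexx.
by rewrite ge_min IH ?orbT.
Qed.

Lemma min_ord_ex (n : nat) (z : 'I_n.+1 -> R) : exists j, min_ord z = z j.
Proof.
rewrite /min_ord; apply: (big_ind (fun v => exists j, v = z j)).
- by exists ord0.
- move=> a b [i ->] [k ->]; case: (leP (z i) (z k)) => h.
  + by exists i.
  + by exists k.
- by move=> i _; exists i.
Qed.

Lemma min_ord_leP (n : nat) (z : 'I_n.+1 -> R) x : min_ord z <= x <-> exists j, z j <= x.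
Proof.
split.
  by have [j ->] := min_ord_ex n z => h; exists j.
by move=> [j h]; apply: le_trans h; apply: min_ord_le.
Qed.

Lemma min_ord_gtP (n : nat) (z : 'I_n.+1 -> R) x : x < min_ord z <-> forall j, x < z j.
Proof.
split.
  by move=> h j; apply: (lt_le_trans h); apply: min_ord_le.
by have [j ->] := min_ord_ex n z => h; apply: h.
Qed.
End A.

Section S.
Context (d : measure_display) (T : measurableType d) (R : realType)
        (P : probability T R).

Lemma block_indep (I' I : finType) (Z : I' -> T -> R) (b : I' -> I) (A : I' -> set R) :
  (forall i, measurable_fun setT (Z i)) -> (forall i, measurable (A i)) ->
  mutually_independent P Z ->
  forall K : {set I},
  P (\big[setI/setT]_(k in K) \big[setI/setT]_(i | b i == k) (Z i @^-1` A i)) =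
  (\prod_(k in K) \prod_(i | b i == k) P (Z i @^-1` A i))%E.
Proof.
move=> mZ mA ind K.
pose B i := if b i \in K then A i else setT.
have mB : forall i, measurable (B i) by move=> i; rewrite /B; case: ifP.
have := ind B mB.
have -> : \big[setI/setT]_(i : I') (Z i @^-1` B i) =
  \big[setI/setT]_(k in K) \big[setI/setT]_(i | b i == k) (Z i @^-1` A i).
  apply/seteqP; split => t /bigsetIP H; apply/bigsetIP.
  - move=> k _ kK; apply/bigsetIP => i _ /eqP bik.
    have := H i (mem_index_enum _) isT; rewrite /B /preimage /= bik kK //.
  - move=> i _ _; rewrite /B /preimage /=; case: ifP => // biK.
    by have /bigsetIP := H (b i) (mem_index_enum _) biK; apply => //.
move=> E; rewrite E.
rewrite (bigID (fun i => b i \in K)) /=.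
rewrite [X in (_ * X)%E]big1 ?mule1; last first.
  by move=> i /negbTE biK; rewrite /B biK preimage_setT probability_setT.
rewrite (partition_big b (fun k => k \in K)) //=.
apply: eq_bigr => k kK; apply: eq_big => i.
  by case: eqP => [->|]; rewrite ?kK ?andbF.
by move=> /andP [biK _]; rewrite /B biK.
Qed.


Lemma compl_indep (I : finType) (G : I -> set T) (p : I -> R) :
 (forall i, measurable (G i)) ->
 (forall K : {set I}, P (\big[setI/setT]_(k in K) G k) = (\prod_(k in K) p k)%:E) ->
 forall (J K : {set I}), (fintype.disjoint (mem (K)) (mem (J))) ->
 P (\big[setI/setT]_(k in K) G k `&` \big[setI/setT]_(j in J) ~` G j) =
 ((\prod_(k in K) p k) * \prod_(j in J) (1 - p j))%:E.
Proof.
move=> mG HK J; have [n] := ubnP #|J|; elim: n J => // n IH J.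
case: (finset.set_0Vmem J) => [-> _ K _|[j jJ] ltJ K dKJ].
  by rewrite !big_set0 setIT HK mulr1.
have jK : j \notin K by apply/negP => jK; move: (disjointFr dKJ jK); rewrite jJ.
have ltJ' : (#|J :\ j| < n)%N.
  by move: ltJ; rewrite (cardsD1 j J) jJ.
have dKJ' : (fintype.disjoint (mem (K)) (mem (J :\ j))).
  rewrite disjoint_subset; apply/fintype.subsetP => i iK; rewrite !inE (disjointFr dKJ iK).
  by rewrite andbF.
have dKJ'' : (fintype.disjoint (mem (j |: K)) (mem (J :\ j))).
  rewrite disjoint_subset; apply/fintype.subsetP => i; rewrite !inE => /orP [/eqP -> | iK].
    by rewrite eqxx.
  by rewrite (disjointFr dKJ iK) andbF.
rewrite (big_setD1 j jJ) (big_setD1 j jJ) /=.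
set E := \big[setI/setT]_(k in K) G k `&` \big[setI/setT]_(i in J :\ j) ~` G i.
have mE : measurable E.
  apply: measurableI; apply: bigsetI_measurable => i _ //.
  exact: measurableC.
rewrite [~` G j `&` _]setIC setIA -setDE measureD //; last first.
  apply: (le_lt_trans (probability_le1 P mE)); exact: ltey.
rewrite -[LHS]/(P E - P (E `&` G j))%E. rewrite (IH _ ltJ' K dKJ').
have -> : E `&` G j = \big[setI/setT]_(k in j |: K) G k `&` \big[setI/setT]_(i in J :\ j) ~` G i.
  by rewrite big_setU1 //= /E setIAC [G j `&` _]setIC.
rewrite (IH _ ltJ' _ dKJ'') big_setU1 //= -EFinB; congr EFin; ring.
Qed.


End S.

Lemma bigsetIP' (T : Type) (I : finType) (Q : pred I) (f : I -> set T) t :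
  (\big[setI/setT]_(i | Q i) f i) t <-> (forall i, Q i -> f i t).
Proof.
rewrite bigsetIP; split => H i; first by apply: H; exact: mem_index_enum.
by move=> _; apply: H.
Qed.

Lemma prod_const_ord (R : realType) (c : R) k : \prod_(i < k) c = c ^+ k.
Proof. by elim: k => [|k IH]; rewrite ?big_ord0 ?expr0 // big_ord_recr IH exprSr. Qed.

Theorem corollary4p1 (d : measure_display) (T : measurableType d)
  (R : realType) (P : probability T R) (n : nat)
  (X Y : 'I_n.+1 -> T -> R) :
  let Z := fun k : 'I_n.+1 + 'I_n.+1 =>
             match k with inl j => X j | inr j => Y j end in
  (forall k, measurable_fun setT (Z k)) ->
  mutually_independent P Z ->
  identically_distributed P Z ->
  (forall k, abs_continuous P (Z k)) ->
  (forall k, support_nonneg_halfline P (Z k)) ->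
  hr_ratio_ge P
    (fun t => Num.max (min_ord (fun j => X j t)) (min_ord (fun j => Y j t)))
    (fun t => min_ord (fun j => Num.max (X j t) (Y j t))).
Proof.
move=> Z mZ ind idd _ _.
have mpre : forall k B, measurable B -> measurable (Z k @^-1` B).
  by move=> k B mB; rewrite -[_ @^-1` _]setTI; apply: mZ.
pose F := Defs.cdf P (X ord0).
have PL : forall k x, P (Z k @^-1` `]-oo, x]) = (F x)%:E.
  move=> k x; rewrite (idd k (inl ord0)) //= /F /Defs.cdf fineK //.
  by apply: fin_num_measure; exact: (mpre (inl ord0)).
have PG : forall k x, P (Z k @^-1` `]x, +oo[) = (1 - F x)%:E.
  move=> k x; rewrite -setCitvl -preimage_setC probability_setC ?PL //; exact: mpre.
have F01 : forall x, 0 <= F x <= 1.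
  move=> x; have h := PL (inl ord0) x.
  have h0 : (0 <= (F x)%:E)%E by rewrite -h measure_ge0.
  have h1 : ((F x)%:E <= 1)%E by rewrite -h probability_le1 //; exact: mpre.
  by apply/andP; split; rewrite -lee_fin.
have Fm : {homo F : x y / x <= y}.
  move=> x y xy; rewrite -lee_fin -(PL (inl ord0) x) -(PL (inl ord0) y).
  apply: le_measure; rewrite ?inE; try exact: mpre.
  by move=> t /=; rewrite !in_itv /= => h; apply: le_trans h xy.
have eU : Defs.cdf P (fun t => Num.max (min_ord (fun j => X j t)) (min_ord (fun j => Y j t)))
    = (fun y => (1 - (1 - F y)^+n.+1)^+2).
  apply/funext => x; rewrite /Defs.cdf.
  pose bU (k : 'I_n.+1 + 'I_n.+1) : bool := if k is inl _ then true else false.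
  pose H (k : bool) := \big[setI/setT]_(i | bU i == k) (Z i @^-1` `]x, +oo[).
  have mH : forall k, measurable (H k).
    by move=> k; apply: bigsetI_measurable => i _; apply: mpre.
  have HK : forall K : {set bool},
      P (\big[setI/setT]_(k in K) H k) = (\prod_(k in K) (1 - F x)^+n.+1)%:E.
    move=> K; rewrite (@block_indep _ _ _ P _ _ Z bU (fun _ => [set` `]x, +oo[]) mZ (fun _ => measurable_itv _) ind K).
    rewrite -prodEFin; apply: eq_bigr => k _.
    rewrite (eq_bigr (fun _ => (1 - F x)%:E)); last by move=> i _; rewrite PG.
    rewrite prodEFin big_sumType; case: k => /=.
      by rewrite big_pred0_eq mulr1 prod_const_ord.
    by rewrite big_pred0_eq mul1r prod_const_ord.
  have ce := @compl_indep _ _ _ P _ H (fun _ => (1 - F x)^+n.+1) mH HK [set: bool] finset.set0.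
  rewrite finset.big_set0 setTI in ce.
  have ev : (fun t => Num.max (min_ord (fun j => X j t)) (min_ord (fun j => Y j t)))
      @^-1` `]-oo, x] = \big[setI/setT]_(k in [set: bool]%SET) ~` H k.
    apply/seteqP; split => t /=.
    - rewrite in_itv /= ge_max => /andP [hX hY]; apply/bigsetIP' => k _.
      move=> /bigsetIP' Hk; case: k Hk => Hk.
      + have [j hj] := (min_ord_leP _ _ _ _).1 hX.
        have := Hk (inl j) (eqxx _); rewrite /= in_itv /= andbT => h.
        by move: (lt_le_trans h hj); rewrite ltxx.
      + have [j hj] := (min_ord_leP _ _ _ _).1 hY.
        have := Hk (inr j) (eqxx _); rewrite /= in_itv /= andbT => h.
        by move: (lt_le_trans h hj); rewrite ltxx.
    - move=> /bigsetIP' H'; rewrite in_itv /= ge_max; apply/andP; split.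
      + rewrite leNgt; apply/negP => /min_ord_gtP hall.
        move: (H' true (finset.in_setT _)); rewrite /setC /=; apply; apply/bigsetIP' => i.
        by case: i => // j _ /=; rewrite in_itv /= andbT; exact: hall j.
      + rewrite leNgt; apply/negP => /min_ord_gtP hall.
        move: (H' false (finset.in_setT _)); rewrite /setC /=; apply; apply/bigsetIP' => i.
        by case: i => // j _ /=; rewrite in_itv /= andbT; exact: hall j.
  rewrite ev ce; last by rewrite -setI_eq0 finset.set0I.
  by rewrite finset.big_set0 mul1r prodr_const cardsT card_bool.
have eV : Defs.cdf P (fun t => min_ord (fun j => Num.max (X j t) (Y j t)))
    = (fun y => 1 - (1 - F y^+2)^+n.+1).
  apply/funext => x; rewrite /Defs.cdf.
  pose b (k : 'I_n.+1 + 'I_n.+1) : 'I_n.+1 := match k with inl j => j | inr j => j end.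
  pose G (k : 'I_n.+1) := \big[setI/setT]_(i | b i == k) (Z i @^-1` `]-oo, x]).
  have mG : forall k, measurable (G k).
    by move=> k; apply: bigsetI_measurable => i _; apply: mpre.
  have GK : forall K : {set 'I_n.+1},
      P (\big[setI/setT]_(k in K) G k) = (\prod_(k in K) F x ^+ 2)%:E.
    move=> K; rewrite (@block_indep _ _ _ P _ _ Z b (fun _ => [set` `]-oo, x]]) mZ (fun _ => measurable_itv _) ind K).
    rewrite -prodEFin; apply: eq_bigr => k _.
    rewrite (eq_bigr (fun _ => (F x)%:E)); last by move=> i _; rewrite PL.
    by rewrite prodEFin big_sumType /= !big_pred1_eq expr2.
  have ce := @compl_indep _ _ _ P _ G (fun _ => F x ^+ 2) mG GK [set: 'I_n.+1]%SET finset.set0.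
  rewrite finset.big_set0 setTI in ce.
  have ev : (fun t => min_ord (fun j => Num.max (X j t) (Y j t)))
      @^-1` `]-oo, x] = ~` \big[setI/setT]_(k in [set: 'I_n.+1]%SET) ~` G k.
    apply/seteqP; split => t /=.
    - rewrite in_itv /= => /(min_ord_leP _ _ _ _).1 [j hj] /bigsetIP' Hall.
      move: (Hall j (finset.in_setT _)); rewrite /setC /=; apply.
      apply/bigsetIP' => -[] i /= /eqP eij; subst j; rewrite in_itv /=;
        by move: hj; rewrite ge_max => /andP [].
    - move=> nH; rewrite in_itv /=; apply/(min_ord_leP _ _ _ _).2.
      apply: contrapT => nE; apply: nH; apply/bigsetIP' => k _; rewrite /setC /= => Gk.
      apply: nE; exists k; move/bigsetIP': Gk => Gk.
      have := Gk (inl k) (eqxx _); have := Gk (inr k) (eqxx _).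
      rewrite /= !in_itv /= => h1 h2; rewrite ge_max h1 h2 //.
  rewrite ev probability_setC; last first.
    by apply: bigsetI_measurable => i _; apply: measurableC.
  rewrite ce; last by rewrite -setI_eq0 finset.set0I.
  by rewrite finset.big_set0 mul1r prodr_const cardsT card_ord -EFinB.
rewrite /hr_ratio_ge /hr_ratio_le => x y _ xy _ _ dx dy hx hy.
rewrite /hazard /density /survival eU eV in dx dy hx hy *.
exact: (@analytic R F n F01 Fm x y xy dx dy hx hy).
Qed.
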